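(* Let $p$ be a prime power and let $G(p)$ be the point–line incidence graph of a projective plane of order $p$: a bipartite graph on $n = 2(p^2+p+1)$ vertices whose parts are the $p^2+p+1$ points and the $p^2+p+1$ lines, a point being adjacent to a line iff it lies on the line (so $G(p)$ is $(p+1)$-regular and contains no $K_{2,2}$). Then $$\chi_{2K_2}(G(p)) \ge \sqrt{\frac{2(p^2+p+1)(p+1)}{2p+1}} + \frac12 \ge \sqrt{\frac n2 + \frac{\sqrt n}{4}} + \frac12.$$
   Context: All graphs are finite and simple. For a fixed bipartite graph $H$, a proper vertex coloring of a graph $G$ is called an $H$-avoiding coloring if for any two color classes, the subgraph of $G$ induced by their union contains no induced subgraph isomorphic to $H$. $\chi_H(G)$ denotes the minimum number of colors in an $H$-avoiding coloring of $G$. $2K_2$ is the disjoint union of two edges. *)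

(* Defs.v *)
From mathcomp Require Import all_boot all_order all_algebra.
Set Implicit Arguments. Unset Strict Implicit. Unset Printing Implicit Defensive.

Definition simple_graph (V : finType) (e : rel V) : bool :=
  [forall x, ~~ e x x] && [forall x, forall y, e x y == e y x].

Definition has_induced_copy (W V : finType) (eH : rel W) (e : rel V)
    (S : pred V) : bool :=
  [exists f : {ffun W -> V},
     injectiveb f && [forall x, f x \in S] &&
     [forall x, forall y, e (f x) (f y) == eH x y]].

Definition proper_coloring (V : finType) (e : rel V) (k : nat)
    (c : {ffun V -> 'I_k}) : bool :=
  [forall x, forall y, e x y ==> (c x != c y)].

Definition H_avoiding (W V : finType) (eH : rel W) (e : rel V) (k : nat)
    (c : {ffun V -> 'I_k}) : bool :=
  proper_coloring e c &&
  [forall i : 'I_k, forall j : 'I_k,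
     ~~ has_induced_copy eH e [pred v | (c v == i) || (c v == j)]].

(* chi_H(G): least k admitting an H-avoiding k-coloring (searched among
   k <= #|V|; if none exists below #|V|+1, the value is #|V|+1). *)
Definition chi_H (W V : finType) (eH : rel W) (e : rel V) : nat :=
  find (fun k => [exists c : {ffun V -> 'I_k}, H_avoiding eH e c])
       (iota 0 #|V|.+1).

Definition two_K2 : rel 'I_4 :=
  fun x y => ((val x == 0) && (val y == 1)) || ((val x == 1) && (val y == 0))
          || ((val x == 2) && (val y == 3)) || ((val x == 3) && (val y == 2)).

Definition prime_power (p : nat) : Prop :=
  exists q k, prime q /\ (0 < k) /\ p = q ^ k.

Definition collinear (P L : finType) (inc : P -> L -> bool) (x y z : P) :=
  [exists l, [&& inc x l, inc y l & inc z l]].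

Definition projective_plane_of_order (P L : finType) (inc : P -> L -> bool)
    (p : nat) : Prop :=
  (forall x y : P, x != y -> #|[set l | inc x l && inc y l]| = 1) /\
  (forall l m : L, l != m -> #|[set x | inc x l && inc x m]| = 1) /\
  (exists a b c d : P, [/\ uniq [:: a; b; c; d],
      ~~ collinear inc a b c, ~~ collinear inc a b d,
      ~~ collinear inc a c d & ~~ collinear inc b c d]) /\
  (forall l : L, #|[set x | inc x l]| = p.+1).

Definition incidence_graph (P L : finType) (inc : P -> L -> bool)
    : rel (P + L)%type :=
  fun u v => match u, v with
             | inl x, inr l => inc x l
             | inr l, inl x => inc x l
             | _, _ => false
             end.

(* Main.v *)
Require Import Defs.
From mathcomp Require Import all_boot all_order all_algebra zify ring lra.
Import Order.TTheory GRing.Theory Num.Theory.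
Set Implicit Arguments. Unset Strict Implicit.

Lemma sum_bool (A : finType) (P : pred A) :
  (\sum_a (P a : nat) = #|[set a | P a]|)%N.
Proof.
rewrite -sum1_card [RHS]big_mkcond /=; apply: eq_bigr => a _; rewrite inE.
by case: (P a).
Qed.

Lemma dcount (A B : finType) (r : A -> B -> bool) :
  (\sum_a #|[set b | r a b]| = \sum_b #|[set a | r a b]|)%N.
Proof.
under eq_bigr do rewrite -sum_bool.
rewrite exchange_big /=; apply: eq_bigr => b _; by rewrite sum_bool.
Qed.

Lemma sum_ind (A : finType) (P : pred A) (F : A -> nat) n :
  (forall a, F a = if P a then n else 0%N) ->
  (\sum_a F a = #|[set a | P a]| * n)%N.
Proof.
move=> HF; rewrite (eq_bigr (fun a => (P a : nat) * n)%N).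
  by rewrite -big_distrl /= sum_bool.
by move=> a _; rewrite HF; case: (P a); rewrite ?mul1n ?mul0n.
Qed.


Lemma line_uniq (P L : finType) (inc : P -> L -> bool) x y l m :
  (forall x y : P, x != y -> #|[set l | inc x l && inc y l]| = 1%N) ->
  x != y -> inc x l -> inc y l -> inc x m -> inc y m -> l = m.
Proof.
move=> H nxy xl yl xm ym; have /eqP/cards1P[l0 Hl0] := H x y nxy.
have : l \in [set l | inc x l && inc y l] by rewrite inE xl yl.
have : m \in [set l | inc x l && inc y l] by rewrite inE xm ym.
by rewrite Hl0 !inE => /eqP -> /eqP ->.
Qed.

Lemma line_through (P L : finType) (inc : P -> L -> bool) x y :
  (forall x y : P, x != y -> #|[set l | inc x l && inc y l]| = 1%N) ->
  x != y -> exists l, inc x l && inc y l.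
Proof.
move=> H nxy; have /eqP/cards1P[l0 Hl0] := H x y nxy.
exists l0; have : l0 \in [set l0] by rewrite inE.
by rewrite -Hl0 inE.
Qed.


Lemma nonincident (P L : finType) (inc : P -> L -> bool) p x :
  projective_plane_of_order inc p -> exists l, ~~ inc x l.
Proof.
move=> [H1 [H2 [[a [b [c [d [U nabc _ _ _]]]]] H4]]].
case: (pickP (fun l => ~~ inc x l)) => [l Hl|Hall]; first by exists l.
have allx l : inc x l by have := Hall l; rewrite /= => /negbFE.
move: U; rewrite /= !inE !negb_or => /andP[/and3P[ab ac _] /andP[/andP[bc _] _]].
have [lab /andP[al bl]] := line_through H1 ab.
case: (eqVneq x a) => [xa|xa].
  have [lbc /andP[bl' cl']] := line_through H1 bc.
  move: nabc; rewrite /collinear => /existsP; case; exists lbc.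
  by rewrite -xa allx bl' cl'.
have [lac /andP[al' cl']] := line_through H1 ac.
have E := line_uniq H1 xa (allx lab) al (allx lac) al'.
move: nabc; rewrite /collinear => /existsP; case; exists lab.
by rewrite al bl E cl'.
Qed.

Lemma degree (P L : finType) (inc : P -> L -> bool) p x :
  projective_plane_of_order inc p -> #|[set l | inc x l]| = p.+1.
Proof.
move=> H; have [l nxl] := nonincident x H.
case: H => [H1 [H2 [_ H4]]].
have := dcount (fun m y => inc x m && inc y m && inc y l).
rewrite (sum_ind (P := fun m => inc x m) (n := 1%N)); last first.
  move=> m; case xm: (inc x m).
    have ml : m != l by apply: contraNneq nxl => <-.
    by rewrite -(H2 _ _ ml); apply: eq_card => y; rewrite !inE.
  by apply: eq_card0 => y; rewrite !inE.
rewrite (sum_ind (P := fun y => inc y l) (n := 1%N)); last first.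
  move=> y; case yl: (inc y l).
    have xy : x != y by apply: contraNneq nxl => ->.
    by rewrite -(H1 _ _ xy); apply: eq_card => m; rewrite !inE andbT.
  by apply: eq_card0 => m; rewrite !inE andbF.
by rewrite !muln1 H4.
Qed.

Lemma num_points (P L : finType) (inc : P -> L -> bool) p :
  projective_plane_of_order inc p -> #|P| = (p * p.+1).+1.
Proof.
move=> H; have H' := H; case: H' => [H1 [H2 [[a _] H4]]].
have := dcount (fun y m => (y != a) && inc a m && inc y m).
rewrite (sum_ind (P := fun y => y != a) (n := 1%N)); last first.
  move=> y; case ya: (y != a).
    rewrite eq_sym in ya; rewrite -(H1 _ _ ya); apply: eq_card => m.
    by rewrite !inE.
  by apply: eq_card0 => m; rewrite !inE.
rewrite (sum_ind (P := fun m => inc a m) (n := p)); last first.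
  move=> m; case am: (inc a m).
    have := H4 m; rewrite (cardsD1 a) inE am add1n => -[<-].
    apply: eq_card => y; by rewrite !inE andbT.
  by apply: eq_card0 => y; rewrite !inE andbF.
rewrite (degree a H) muln1.
have -> : [set y | y != a] = [set~ a] by apply/setP => y; rewrite !inE.
rewrite cardsC1 => E.
have : (0 < #|P|)%N by apply/card_gt0P; exists a.
move: E; case: #|P| => [|n] //= ->; rewrite mulnC.
by [].
Qed.


Definition inD (P L : finType) (inc : P -> L -> bool) k
  (c : {ffun (P + L)%type -> 'I_k}) (i j : 'I_k) x l :=
  inc x l && (((c (inl x) == i) && (c (inr l) == j)) ||
              ((c (inl x) == j) && (c (inr l) == i))).

Lemma prop_col (P L : finType) (inc : P -> L -> bool) k
  (c : {ffun (P + L)%type -> 'I_k}) x l :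
  proper_coloring (incidence_graph inc) c -> inc x l -> c (inl x) != c (inr l).
Proof. by move/forallP/(_ (inl x))/forallP/(_ (inr l))/implyP. Qed.

Lemma colorsD (P L : finType) (inc : P -> L -> bool) k
  (c : {ffun (P + L)%type -> 'I_k}) i j x1 l1 x2 l2 :
  proper_coloring (incidence_graph inc) c ->
  inD inc c i j x1 l1 -> inD inc c i j x2 l2 -> inc x1 l2 -> inD inc c i j x1 l2.
Proof.
move=> pc /andP[_ h1] /andP[_ h2] h; rewrite /inD h /=; have := prop_col pc h.
move: h1 h2.
by case/orP => /andP[/eqP-> _]; case/orP => /andP[_ /eqP->]; rewrite ?eqxx ?orbT.
Qed.

Lemma no2K2 (P L : finType) (inc : P -> L -> bool) k
  (c : {ffun (P + L)%type -> 'I_k}) i j x1 l1 x2 l2 :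
  H_avoiding two_K2 (incidence_graph inc) c ->
  inD inc c i j x1 l1 -> inD inc c i j x2 l2 -> x1 != x2 -> l1 != l2 ->
  inD inc c i j x1 l2 || inD inc c i j x2 l1.
Proof.
move=> /andP[pc Hav] d1 d2 x12 l12; apply/negPn/negP; rewrite negb_or => /andP[n12 n21].
have n12' : inc x1 l2 = false.
  by apply/negP => h; move/negP: n12; apply; apply: colorsD d1 d2 h.
have n21' : inc x2 l1 = false.
  by apply/negP => h; move/negP: n21; apply; apply: colorsD d2 d1 h.
have i11 : inc x1 l1 by case/andP: d1.
have i22 : inc x2 l2 by case/andP: d2.
move: Hav => /forallP/(_ i)/forallP/(_ j)/negP; apply.
pose f := [ffun t : 'I_4 => if val t == 0 then inl x1 else if val t == 1 then inr l1
   else if val t == 2 then inl x2 else inr l2] : {ffun 'I_4 -> (P + L)%type}.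
apply/existsP; exists f; apply/andP; split; first (apply/andP; split).
- apply/injectiveP => -[[|[|[|[|a]]]] Ha] // [[|[|[|[|b]]]] Hb] //; rewrite !ffunE /= => E;
  first [ by apply: val_inj | by case: E | (case: E => E; subst; by rewrite eqxx in x12 l12) ].
- move: d1 d2 => /andP[_ h1] /andP[_ h2].
  apply/forallP => -[[|[|[|[|a]]]] Ha] //; rewrite !ffunE /= inE.
  + by case/orP: h1 => /andP[-> _]; rewrite ?orbT.
  + by case/orP: h1 => /andP[_ ->]; rewrite ?orbT.
  + by case/orP: h2 => /andP[-> _]; rewrite ?orbT.
  + by case/orP: h2 => /andP[_ ->]; rewrite ?orbT.
- apply/forallP => -[[|[|[|[|a]]]] Ha] //; apply/forallP => -[[|[|[|[|b]]]] Hb] //;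
  by rewrite !ffunE /= ?i11 ?i22 ?n12' ?n21'.
Qed.


Lemma double_star (P L : finType) (inc : P -> L -> bool) p k
  (c : {ffun (P + L)%type -> 'I_k}) i j :
  projective_plane_of_order inc p ->
  H_avoiding two_K2 (incidence_graph inc) c ->
  (#|[set z : P * L | inD inc c i j z.1 z.2]| <= 2 * p + 1)%N.
Proof.
move=> H Hav; have H' := H; case: H' => [H1 [H2 [_ H4]]].
set D := [set z : P * L | _].
case: (set_0Vmem D) => [->|[z0]]; first by rewrite cards0.
rewrite inE => z0D.
have no2 := no2K2 (i := i) (j := j) Hav.
have [x0 _ Hx0] := @arg_maxnP P z0.1 xpredT (fun x => #|[set l | inD inc c i j x l]|) isT.
have [l0 _ Hl0] := @arg_maxnP L z0.2 xpredT (fun l => #|[set x | inD inc c i j x l]|) isT.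
have nestP x l : inD inc c i j x l -> inD inc c i j x0 l.
  move=> xl; apply/negPn/negP => nx0l.
  have xx0 : x != x0 by apply: contraNneq nx0l => <-.
  have : [set l | inD inc c i j x0 l] \proper [set l | inD inc c i j x l].
    apply/properP; split; last by exists l; rewrite !inE.
    apply/subsetP => l'; rewrite !inE => x0l'; apply/negPn/negP => nxl'.
    have ll' : l != l' by apply: contraNneq nx0l => ->.
    by have := no2 _ _ _ _ xl x0l' xx0 ll'; rewrite (negbTE nxl') (negbTE nx0l).
  by move/proper_card; rewrite ltnNge; have := Hx0 x isT; rewrite /= => ->.
have lineP x l : inD inc c i j x l -> inD inc c i j x l0.
  move=> xl; apply/negPn/negP => nxl0.
  have ll0 : l != l0 by apply: contraNneq nxl0 => <-.
  have : [set x | inD inc c i j x l0] \proper [set x | inD inc c i j x l].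
    apply/properP; split; last by exists x; rewrite !inE.
    apply/subsetP => x'; rewrite !inE => x'l0; apply/negPn/negP => nx'l.
    have xx' : x != x' by apply: contraNneq nxl0 => ->.
    by have := no2 _ _ _ _ xl x'l0 xx' ll0; rewrite (negbTE nx'l) (negbTE nxl0).
  by move/proper_card; rewrite ltnNge; have := Hl0 l isT; rewrite /= => ->.
have incD x l : inD inc c i j x l -> inc x l by case/andP.
have cover x l : inD inc c i j x l -> (x == x0) || (l == l0).
  move=> xl; apply/negPn/negP; rewrite negb_or => /andP[xx0 ll0].
  have a := nestP _ _ xl; have b := lineP _ _ xl; have d := lineP _ _ a.
  by move/eqP: ll0; apply; apply: (line_uniq H1 xx0); apply: incD.
have x0l0 : inD inc c i j x0 l0 by apply: lineP; apply: nestP z0D.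
pose A := [set (x0, l) | l in [set l | inc x0 l]].
pose B := [set (x, l0) | x in [set x | inc x l0]].
have cA : #|A| = p.+1 by rewrite card_imset ?(degree x0 H) // => a b [].
have cB : #|B| = p.+1 by rewrite card_imset ?H4 // => a b [].
have cAB : (0 < #|A :&: B|)%N.
  apply/card_gt0P; exists (x0, l0); rewrite inE; apply/andP; split; apply/imsetP.
    by exists l0; rewrite // inE incD.
  by exists x0; rewrite // inE incD.
have : D \subset A :|: B.
  apply/subsetP => -[x l]; rewrite inE /= => xl; rewrite inE.
  case/orP: (cover _ _ xl) => /eqP E; subst.
    by apply/orP; left; apply/imsetP; exists l; rewrite // inE incD.
  by apply/orP; right; apply/imsetP; exists x; rewrite // inE incD.
move/subset_leq_card; rewrite cardsU cA cB => h.
apply: (leq_trans h); move: cAB; lia.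
Qed.


Lemma sum_sel k (X : bool) (a b : 'I_k) :
  (\sum_(i < k) \sum_(j < k) ((X && (a == i) && (b == j)) : nat) = X)%N.
Proof.
rewrite (bigD1 a) //= [X in (_ + X)%N]big1 ?addn0; last first.
  by move=> i ia; apply: big1 => j _; rewrite (eq_sym a) (negbTE ia) andbF.
rewrite (bigD1 b) //= [X in (_ + X)%N]big1 ?addn0; last first.
  by move=> j jb; rewrite (eq_sym b) (negbTE jb) andbF.
by rewrite !eqxx !andbT.
Qed.

Lemma split_inD (P L : finType) (inc : P -> L -> bool) k
  (c : {ffun (P + L)%type -> 'I_k}) i j x l :
  proper_coloring (incidence_graph inc) c ->
  ((inc x l && (c (inl x) == i) && (c (inr l) == j)) : nat) +
  ((inc x l && (c (inl x) == j) && (c (inr l) == i)) : nat) = inD inc c i j x l.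
Proof.
move=> pc; rewrite /inD; case ixl: (inc x l) => //=.
have := prop_col pc ixl.
case: (c (inl x) =P i) => [->|_]; case: (c (inr l) =P j) => [->|_] /=;
  case: (i =P j) => [->|]; rewrite ?eqxx //=;
  do ?[case: eqP => //=]; by move=> *.
Qed.

Lemma key (P L : finType) (inc : P -> L -> bool) p k
  (c : {ffun (P + L)%type -> 'I_k}) :
  projective_plane_of_order inc p ->
  H_avoiding two_K2 (incidence_graph inc) c ->
  (2 * (#|P| * p.+1) <= k * k.-1 * (2 * p + 1))%N.
Proof.
move=> H Hav; have pc : proper_coloring (incidence_graph inc) c by case/andP: Hav.
have hE : (\sum_(z : P * L) (inc z.1 z.2 : nat) = #|P| * p.+1)%N.
  rewrite -(pair_bigA _ (fun x l => (inc x l : nat))) /=.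
  under eq_bigr => x _ do rewrite sum_bool (degree x H).
  by rewrite (sum_ind (P:=xpredT) (n:=p.+1)) // cardsT.
have h2 : (2 * (#|P| * p.+1) =
   \sum_(i < k) \sum_(j < k) #|[set z : P * L | inD inc c i j z.1 z.2]|)%N.
  rewrite -hE big_distrr /=.
  transitivity (\sum_(z : P * L) \sum_(i < k) \sum_(j < k) (inD inc c i j z.1 z.2 : nat))%N.
    apply: eq_bigr => z _; symmetry.
    under eq_bigr => i _ do under eq_bigr => j _ do
      rewrite -(@split_inD _ _ inc _ c i j z.1 z.2 pc).
    under eq_bigr => i _ do rewrite big_split /=.
    rewrite big_split /= sum_sel exchange_big /= sum_sel.
    by rewrite mul2n addnn.
  rewrite exchange_big; apply: eq_bigr => i _; rewrite exchange_big.
  by apply: eq_bigr => j _; rewrite sum_bool.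
rewrite h2.
apply: (@leq_trans (\sum_(i < k) \sum_(j < k) ((i != j) * (2 * p + 1)))%N).
  apply: leq_sum => i _; apply: leq_sum => j _.
  case: eqVneq => [<-|ij]; last by rewrite mul1n (double_star _ _ H Hav).
  rewrite mul0n leqn0; apply/eqP/eq_card0 => z; rewrite !inE /inD.
  apply/negP => /andP[ixl]; rewrite orbb => /andP[/eqP e1 /eqP e2].
  by move: (prop_col pc ixl); rewrite e1 e2 eqxx.
have inner (i : 'I_k) : (\sum_(j < k) ((i != j) * (2 * p + 1)) = k.-1 * (2 * p + 1))%N.
  rewrite (sum_ind (P := fun j => i != j) (n := (2 * p + 1)%N)); last first.
    by move=> j; case: (i != j); rewrite ?mul1n ?mul0n.
  have -> : [set j | i != j] = [set~ i] by apply/setP => j; rewrite !inE eq_sym.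
  by rewrite cardsC1 card_ord.
under eq_bigr => i _ do rewrite inner.
by rewrite (sum_ind (P:=xpredT) (n := (k.-1 * (2 * p + 1))%N)) // cardsT card_ord mulnA.
Qed.


Lemma chi_bound (P L : finType) (inc : P -> L -> bool) p :
  projective_plane_of_order inc p ->
  (2 * (#|P| * p.+1) <= chi_H two_K2 (incidence_graph inc) *
     (chi_H two_K2 (incidence_graph inc)).-1 * (2 * p + 1))%N.
Proof.
move=> H; rewrite /chi_H.
set F := (fun k => _); set s := iota 0 _.
have := find_size F s; rewrite size_iota leq_eqVlt => /orP[/eqP ->|lt].
  rewrite card_sum /=; have := num_points H; move: #|P| #|L| => a b ha; nia.
have hasF : has F s by rewrite has_find size_iota.
have := nth_find 0 hasF; rewrite nth_iota // add0n => /existsP[c Hc].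
exact: key H Hc.
Qed.

Local Open Scope ring_scope.

Lemma sqrt_le (R : rcfType) (a b : R) : 0 <= b -> a <= b ^+ 2 -> Num.sqrt a <= b.
Proof.
move=> b0 ab; have := ab; rewrite -(ler_sqrt a) ?sqr_ge0 // sqrtr_sqr ger0_norm //.
Qed.

Unset Implicit Arguments. Set Strict Implicit.
Theorem corollary6 (R : rcfType) (p : nat) (P L : finType)
    (inc : P -> L -> bool) :
  prime_power p ->
  projective_plane_of_order inc p ->
  let n : nat := (2 * (p ^ 2 + p + 1))%N in
  let chi : nat := chi_H two_K2 (incidence_graph inc) in
  Num.sqrt ((2 * (p ^ 2 + p + 1) * (p + 1))%:R / (2 * p + 1)%:R : R)
      + 2^-1 <= chi%:R /\
  Num.sqrt (n%:R / 2 + Num.sqrt (n%:R : R) / 4) + 2^-1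
      <= Num.sqrt ((2 * (p ^ 2 + p + 1) * (p + 1))%:R / (2 * p + 1)%:R : R)
         + 2^-1.
Proof.
move=> _ H n chi.
have hK := chi_bound H; rewrite (num_points H) -/chi in hK.
have q0 : 0 < (2 * p + 1)%:R :> R by rewrite ltr0n addn1.
have eA : (2 * (p ^ 2 + p + 1) * (p + 1))%:R = 2 * (p%:R ^+ 2 + p%:R + 1) * (p%:R + 1) :> R.
  by rewrite !natrM !natrD natrX.
have eQ : (2 * p + 1)%:R = 2 * p%:R + 1 :> R by rewrite natrD natrM.
have pge : 0 <= p%:R :> R by rewrite ler0n.
split.
  move: hK; case: chi => [|K]; first by rewrite mul0n leqn0 muln_eq0.
  rewrite /= => hK.
  have hK' : (2 * (p ^ 2 + p + 1) * (p + 1) <= K.+1 * K * (2 * p + 1))%N by lia.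
  have {hK'} hK' : (2 * (p ^ 2 + p + 1) * (p + 1))%:R <= (K.+1 * K * (2 * p + 1))%:R :> R.
    by rewrite ler_nat.
  rewrite eA [in X in _ <= X]natrM [in X in _ <= X]natrM eQ -natr1 in hK'.
  rewrite -[K.+1%:R]natr1.
  have kge := ler0n R K.
  set S := Num.sqrt _.
  suff hS : S <= K%:R + 2^-1 by lra.
  rewrite /S sqrt_le //; first by lra.
  rewrite ler_pdivrMr; last by lra.
  nra.
rewrite lerD2r ler_sqrt; last first.
  rewrite eA eQ divr_ge0 //; last by lra.
  by apply: mulr_ge0; [apply: mulr_ge0|]; nra.
rewrite eA eQ ler_pdivlMr; last by lra.
have en : n%:R = 2 * (p%:R ^+ 2 + p%:R + 1) :> R by rewrite /n natrM !natrD natrX.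
rewrite en.
set s := Num.sqrt _.
have s0 : 0 <= s := sqrtr_ge0 _.
have s2 : s ^+ 2 = 2 * (p%:R ^+ 2 + p%:R + 1) by rewrite sqr_sqrtr //; nra.
have hs : s * (2 * p%:R + 1) <= 4 * (p%:R ^+ 2 + p%:R + 1).
  nra.
lra.
Qed.
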